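(* Suppose Assumptions 1, 2 and 3 hold, let $k>0$, and consider the distributed dynamics $$\dot{\lambda}_i=d_i-\hat{x}_i(\lambda_i)+\phi_i\big(\hat{x}_i(\lambda_i)\big)+k\sum_{j\in\mathcal{N}_i}(\lambda_j-\lambda_i),\qquad i=1,\dots,N,$$ from an arbitrary initial condition in $\mathbb{R}^N$. (a) If $\sum_{i=1}^N\big(d_i-\bar{x}_i+\phi_i(\bar{x}_i)\big)>0$, then for every $i$, $\lambda_i(t)\to+\infty$ and $\lim_{t\to\infty}\dot{\lambda}_i(t)=D_0$, where $D_0=\frac1N\sum_{i=1}^N\big(d_i-\bar{x}_i+\phi_i(\bar{x}_i)\big)>0$. (b) If $\sum_{i=1}^N\big(d_i-\underline{x}_i+\phi_i(\underline{x}_i)\big)<0$, then for every $i$, $\lambda_i(t)\to-\infty$ and $\lim_{t\to\infty}\dot{\lambda}_i(t)=D_1$, where $D_1=\frac1N\sum_{i=1}^N\big(d_i-\underline{x}_i+\phi_i(\underline{x}_i)\big)<0$.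
   Context: For $i=1,\dots,N$: $d_i\in\mathbb{R}$, $\mathcal{X}_i=[\underline{x}_i,\bar{x}_i]$ a nonempty closed interval, $f_i,\phi_i:\mathbb{R}\to\mathbb{R}$. Assumption 1: for each $i$, $f_i$ and $\phi_i$ are continuously differentiable, $f_i$ is strictly convex on $\mathcal{X}_i$, $\phi_i$ is convex on $\mathcal{X}_i$, and $\phi_i'(x_i)<1$ for all $x_i\in\mathcal{X}_i$. Assumption 2: $f_i'(x_i)>0$ for all $x_i\in\mathcal{X}_i$ and all $i$. Assumption 3: the communication graph $\mathcal{G}=(\{1,\dots,N\},\mathcal{E})$ is undirected and connected; $\mathcal{N}_i=\{j:(j,i)\in\mathcal{E}\}$. Let $v_i(x_i)=f_i'(x_i)(1-\phi_i'(x_i))^{-1}$ on $\mathcal{X}_i$ (strictly increasing). Define for $\lambda\in\mathbb{R}$: $\hat{x}_i(\lambda)=\underline{x}_i$ if $\lambda\le v_i(\underline{x}_i)$; $\hat{x}_i(\lambda)=v_i^{-1}(\lambda)$ if $v_i(\underline{x}_i)<\lambda<v_i(\bar{x}_i)$; $\hat{x}_i(\lambda)=\bar{x}_i$ if $\lambda\ge v_i(\bar{x}_i)$. *)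

(* Defs.v *)
From Stdlib Require Import Reals Lra List Relations ClassicalEpsilon.
Open Scope R_scope.

Definition rsum (n : nat) (g : nat -> R) : R :=
  fold_right Rplus 0 (map g (seq 0 n)).

Definition convex_on (f : R -> R) (a b : R) : Prop :=
  forall x y t, a <= x <= b -> a <= y <= b -> 0 <= t <= 1 ->
    f (t * x + (1 - t) * y) <= t * f x + (1 - t) * f y.

Definition strictly_convex_on (f : R -> R) (a b : R) : Prop :=
  forall x y t, a <= x <= b -> a <= y <= b -> x <> y -> 0 < t < 1 ->
    f (t * x + (1 - t) * y) < t * f x + (1 - t) * f y.

Definition vfun (df dphi : R -> R) (x : R) : R := df x / (1 - dphi x).

(* inverse of v on the open interval (lo,hi) (chosen by epsilon; unique since
   v is strictly increasing under the assumptions) *)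
Definition vinv (v : R -> R) (lo hi lam : R) : R :=
  epsilon (inhabits lo) (fun x => lo < x < hi /\ v x = lam).

Definition xhat (v : R -> R) (lo hi lam : R) : R :=
  if Rle_dec lam (v lo) then lo
  else if Rle_dec (v hi) lam then hi
  else vinv v lo hi lam.

Definition edge_rel (N : nat) (adj : nat -> nat -> bool) : relation nat :=
  fun a b => (a < N)%nat /\ (b < N)%nat /\ adj a b = true.

Definition connected_graph (N : nat) (adj : nat -> nat -> bool) : Prop :=
  forall i j, (i < N)%nat -> (j < N)%nat -> clos_refl_trans nat (edge_rel N adj) i j.

(* right-hand side of the dynamics for agent i; N_i = {j | adj j i} *)
Definition rhs (N : nat) (adj : nat -> nat -> bool) (k : R)
  (d lo hi : nat -> R) (phi df dphi : nat -> R -> R)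
  (lam : nat -> R) (i : nat) : R :=
  let xi := xhat (vfun (df i) (dphi i)) (lo i) (hi i) (lam i) in
  d i - xi + phi i xi
  + k * rsum N (fun j => if adj j i then lam j - lam i else 0).

(* Main.v *)
Require Import Defs.
From Stdlib Require Import Reals Lra Lia List Relations ClassicalEpsilon.
Open Scope R_scope.

Lemma fold_plus_acc (l : list R) a : fold_right Rplus a l = fold_right Rplus 0 l + a.
Proof. induction l; simpl; [lra| rewrite IHl; lra]. Qed.

Lemma rsum_0 g : rsum 0 g = 0.
Proof. reflexivity. Qed.

Lemma rsum_S n g : rsum (S n) g = rsum n g + g n.
Proof.
  unfold rsum. rewrite seq_S, map_app, fold_right_app. simpl.
  rewrite fold_plus_acc. lra.
Qed.

Lemma rsum_ext n f g : (forall i, (i < n)%nat -> f i = g i) -> rsum n f = rsum n g.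
Proof.
  induction n; intros H; [reflexivity|]. rewrite !rsum_S, IHn, H; auto; intros; apply H; lia.
Qed.

Lemma rsum_plus n f g : rsum n (fun i => f i + g i) = rsum n f + rsum n g.
Proof. induction n; [rewrite ?rsum_0; try simpl INR; lra|]. rewrite !rsum_S, IHn. lra. Qed.

Lemma rsum_scal n c f : rsum n (fun i => c * f i) = c * rsum n f.
Proof. induction n; [rewrite ?rsum_0; try simpl INR; lra|]. rewrite !rsum_S, IHn. lra. Qed.

Lemma rsum_opp n f : rsum n (fun i => - f i) = - rsum n f.
Proof. induction n; [rewrite ?rsum_0; try simpl INR; lra|]. rewrite !rsum_S, IHn. lra. Qed.

Lemma rsum_minus n f g : rsum n (fun i => f i - g i) = rsum n f - rsum n g.
Proof. induction n; [rewrite ?rsum_0; try simpl INR; lra|]. rewrite !rsum_S, IHn. lra. Qed.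

Lemma rsum_const n c : rsum n (fun _ => c) = INR n * c.
Proof. induction n; [rewrite ?rsum_0; try simpl INR; lra|]. rewrite !rsum_S, IHn, S_INR. lra. Qed.

Lemma rsum_le n f g : (forall i, (i < n)%nat -> f i <= g i) -> rsum n f <= rsum n g.
Proof.
  induction n; intros H; [rewrite ?rsum_0; try simpl INR; lra|]. rewrite !rsum_S.
  assert (f n <= g n) by auto. assert (rsum n f <= rsum n g) by (apply IHn; intros; apply H; lia). lra.
Qed.

Lemma rsum_nonneg n f : (forall i, (i < n)%nat -> 0 <= f i) -> 0 <= rsum n f.
Proof. intros H. rewrite <- (Rmult_0_r (INR n)), <- rsum_const. apply rsum_le; auto. Qed.

Lemma rsum_term_le n f a : (forall i, (i < n)%nat -> 0 <= f i) -> (a < n)%nat -> f a <= rsum n f.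
Proof.
  induction n; intros H Ha; [lia|]. rewrite rsum_S.
  destruct (Nat.eq_dec a n) as [->|Hne].
  - assert (0 <= rsum n f) by (apply rsum_nonneg; intros; apply H; lia). lra.
  - assert (f a <= rsum n f) by (apply IHn; [intros; apply H|]; lia). assert (0 <= f n) by auto. lra.
Qed.

Lemma rsum_swap n m F : rsum n (fun i => rsum m (fun j => F i j)) = rsum m (fun j => rsum n (fun i => F i j)).
Proof.
  induction n.
  - rewrite rsum_0. transitivity (rsum m (fun _ => 0)); [rewrite rsum_const; lra| apply rsum_ext; intros; reflexivity].
  - rewrite rsum_S, IHn, <- rsum_plus. apply rsum_ext; intros. rewrite rsum_S. reflexivity.
Qed.

Lemma dpl_eq f x l l' : derivable_pt_lim f x l -> l = l' -> derivable_pt_lim f x l'.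
Proof. intros H ->; exact H. Qed.

Lemma dpl_plus f g x a b : derivable_pt_lim f x a -> derivable_pt_lim g x b ->
  derivable_pt_lim (fun s => f s + g s) x (a + b).
Proof. intros; now apply derivable_pt_lim_plus. Qed.
Lemma dpl_minus f g x a b : derivable_pt_lim f x a -> derivable_pt_lim g x b ->
  derivable_pt_lim (fun s => f s - g s) x (a - b).
Proof. intros; now apply derivable_pt_lim_minus. Qed.
Lemma dpl_mult f g x a b : derivable_pt_lim f x a -> derivable_pt_lim g x b ->
  derivable_pt_lim (fun s => f s * g s) x (a * g x + f x * b).
Proof. intros; now apply derivable_pt_lim_mult. Qed.
Lemma dpl_const c x : derivable_pt_lim (fun _ => c) x 0.
Proof. apply derivable_pt_lim_const. Qed.
Lemma dpl_scal c f x a : derivable_pt_lim f x a -> derivable_pt_lim (fun s => c * f s) x (c * a).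
Proof. intros. apply dpl_eq with (0 * f x + c * a); [apply dpl_mult; auto; apply dpl_const| ring]. Qed.
Lemma dpl_opp f x a : derivable_pt_lim f x a -> derivable_pt_lim (fun s => - f s) x (- a).
Proof. intros; now apply derivable_pt_lim_opp. Qed.

Lemma rsum_deriv n (F : R -> nat -> R) F' t :
  (forall i, (i < n)%nat -> derivable_pt_lim (fun s => F s i) t (F' i)) ->
  derivable_pt_lim (fun s => rsum n (F s)) t (rsum n F').
Proof.
  induction n; intros H.
  - rewrite rsum_0. apply derivable_pt_lim_ext with (fun _ => 0); [intros; reflexivity| apply dpl_const].
  - rewrite rsum_S. apply derivable_pt_lim_ext with (fun s => rsum n (F s) + F s n).
    + intros; now rewrite rsum_S.
    + apply dpl_plus; [apply IHn; intros; apply H; lia| apply H; lia].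
Qed.

Definition cp (N : nat) (adj : nat -> nat -> bool) (y : nat -> R) (i : nat) : R :=
  rsum N (fun j => if adj j i then y j - y i else 0).
Definition AA (N : nat) (adj : nat -> nat -> bool) (x y : nat -> R) : R :=
  rsum N (fun i => rsum N (fun j => if adj j i then (x j - x i) * (y j - y i) else 0)).
Definition mean (N : nat) (y : nat -> R) : R := / INR N * rsum N y.

Lemma sym_id N adj x y : (forall i j, adj i j = adj j i) ->
  rsum N (fun i => x i * cp N adj y i) = - / 2 * AA N adj x y.
Proof.
  intros Hs.
  set (S := rsum N (fun i => rsum N (fun j => if adj j i then x i * (y j - y i) else 0))).
  assert (E1 : rsum N (fun i => x i * cp N adj y i) = S).
  { apply rsum_ext; intros i _. unfold cp. rewrite <- rsum_scal. apply rsum_ext; intros j _.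
    destruct (adj j i); ring. }
  assert (E2 : S = rsum N (fun i => rsum N (fun j => if adj j i then - (x j * (y j - y i)) else 0))).
  { unfold S. rewrite rsum_swap. apply rsum_ext; intros i _. apply rsum_ext; intros j _.
    rewrite (Hs i j). destruct (adj j i); ring. }
  assert (E3 : S + S = - AA N adj x y).
  { rewrite E2 at 2. unfold S, AA. rewrite <- rsum_opp, <- rsum_plus. apply rsum_ext; intros i _.
    rewrite <- rsum_opp, <- rsum_plus. apply rsum_ext; intros j _. destruct (adj j i); ring. }
  lra.
Qed.

Lemma cp_sum0 N adj y : (forall i j, adj i j = adj j i) -> rsum N (cp N adj y) = 0.
Proof.
  intros Hs. transitivity (rsum N (fun i => 1 * cp N adj y i)).
  { apply rsum_ext; intros; ring. }
  rewrite sym_id by auto. unfold AA.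
  transitivity (-/2 * rsum N (fun _ => 0)).
  - f_equal. apply rsum_ext; intros i _. transitivity (rsum N (fun _ => 0)).
    + apply rsum_ext; intros j _. destruct (adj j i); ring.
    + rewrite rsum_const; ring.
  - rewrite rsum_const; ring.
Qed.

Lemma AA_nonneg N adj y : 0 <= AA N adj y y.
Proof.
  apply rsum_nonneg; intros i _. apply rsum_nonneg; intros j _. destruct (adj j i); [apply Rle_0_sqr|lra].
Qed.

Lemma pair_bound N adj : connected_graph N adj ->
  forall i j, (i < N)%nat -> (j < N)%nat ->
  exists C, 0 <= C /\ forall y, (y i - y j) * (y i - y j) <= C * AA N adj y y.
Proof.
  intros Hc i j Hi Hj. specialize (Hc i j Hi Hj). clear Hi Hj.
  induction Hc as [a b [Ha [Hb Hab]]| a | a b c _ IH1 _ IH2].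
  - exists 1. split; [lra|]. intros y. rewrite Rmult_1_l.
    unfold AA.
    assert (T : (y a - y b) * (y a - y b) <= rsum N (fun j => if adj j b then (y j - y b) * (y j - y b) else 0)).
    { replace ((y a - y b) * (y a - y b)) with ((fun j => if adj j b then (y j - y b) * (y j - y b) else 0) a)
        by (simpl; rewrite Hab; ring).
      apply (rsum_term_le N (fun j => if adj j b then (y j - y b) * (y j - y b) else 0) a); auto. intros j _. destruct (adj j b); [apply Rle_0_sqr|lra]. }
    eapply Rle_trans; [exact T|].
    apply (rsum_term_le N (fun i => rsum N (fun j => if adj j i then (y j - y i) * (y j - y i) else 0))); auto.
    intros i _. apply rsum_nonneg; intros j _. destruct (adj j i); [apply Rle_0_sqr|lra].
  - exists 0. split; [lra|]. intros y. assert (H := AA_nonneg N adj y). nra.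
  - destruct IH1 as [C1 [H1 K1]]. destruct IH2 as [C2 [H2 K2]].
    exists (2 * (C1 + C2)). split; [lra|]. intros y.
    specialize (K1 y). specialize (K2 y).
    assert (H := AA_nonneg N adj y).
    replace (2 * (C1 + C2) * AA N adj y y) with (2 * (C1 * AA N adj y y) + 2 * (C2 * AA N adj y y)) by ring.
    assert ((y a - y c) * (y a - y c) <= 2 * ((y a - y b) * (y a - y b)) + 2 * ((y b - y c) * (y b - y c))).
    { assert (0 <= ((y a - y b) - (y b - y c)) * ((y a - y b) - (y b - y c))) by apply Rle_0_sqr. nra. }
    assert (0 <= C1 * AA N adj y y) by (apply Rmult_le_pos; lra).
    assert (0 <= C2 * AA N adj y y) by (apply Rmult_le_pos; lra).
    lra.
Qed.

Lemma finite_max n (P : R -> nat -> Prop) :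
  (forall C C' i, P C i -> C <= C' -> P C' i) ->
  (forall i, (i < n)%nat -> exists C, 0 <= C /\ P C i) ->
  exists C, 0 <= C /\ forall i, (i < n)%nat -> P C i.
Proof.
  intros Hm. induction n; intros H.
  - exists 0. split; [lra| intros; lia].
  - destruct IHn as [C1 [H1 K1]]. { intros; apply H; lia. }
    destruct (H n) as [C2 [H2 K2]]; [lia|].
    exists (C1 + C2). split; [lra|]. intros i Hi.
    destruct (Nat.eq_dec i n) as [->|Hne].
    + apply Hm with C2; auto; lra.
    + apply Hm with C1; [apply K1; lia| lra].
Qed.

Lemma unif_bound N adj : connected_graph N adj ->
  exists C, 0 <= C /\ forall i j, (i < N)%nat -> (j < N)%nat ->
    forall y, (y i - y j) * (y i - y j) <= C * AA N adj y y.
Proof.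
  intros Hc.
  destruct (finite_max N (fun C i => forall j, (j < N)%nat -> forall y, (y i - y j) * (y i - y j) <= C * AA N adj y y))
    as [C [HC K]].
  - intros C C' i HP HCC j Hj y. specialize (HP j Hj y). assert (H := AA_nonneg N adj y).
    assert (C * AA N adj y y <= C' * AA N adj y y) by (apply Rmult_le_compat_r; lra). lra.
  - intros i Hi.
    apply (finite_max N (fun C j => forall y, (y i - y j) * (y i - y j) <= C * AA N adj y y)).
    + intros C C' j HP HCC y. specialize (HP y). assert (H := AA_nonneg N adj y).
      assert (C * AA N adj y y <= C' * AA N adj y y) by (apply Rmult_le_compat_r; lra). lra.
    + intros j Hj. apply pair_bound; auto.
  - exists C. split; auto.
Qed.

Lemma var_identity N y : (0 < N)%nat ->
  rsum N (fun i => rsum N (fun j => (y i - y j) * (y i - y j))) =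
  2 * INR N * rsum N (fun i => (y i - mean N y) * (y i - mean N y)).
Proof.
  intros HN. assert (HNr : 0 < INR N) by (apply lt_0_INR; lia).
  set (S1 := rsum N y). set (S2 := rsum N (fun i => y i * y i)).
  assert (E1 : rsum N (fun i => rsum N (fun j => (y i - y j) * (y i - y j))) =
               rsum N (fun i => INR N * (y i * y i) + (-2 * S1) * y i + S2)).
  { apply rsum_ext; intros i _.
    transitivity (rsum N (fun j => (y i * y i + (-2 * y i) * y j) + y j * y j)).
    { apply rsum_ext; intros; ring. }
    rewrite rsum_plus, rsum_plus, rsum_const, rsum_scal. fold S2 S1. ring. }
  assert (E2 : rsum N (fun i => (y i - mean N y) * (y i - mean N y)) =
               rsum N (fun i => (y i * y i + (-2 * mean N y) * y i) + mean N y * mean N y)).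
  { apply rsum_ext; intros; ring. }
  rewrite E1, E2, !rsum_plus, !rsum_scal, !rsum_const. fold S1 S2.
  unfold mean. fold S1. field. lra.
Qed.

Lemma poincare N adj : (0 < N)%nat -> connected_graph N adj ->
  exists C, 0 < C /\ forall y,
    rsum N (fun i => (y i - mean N y) * (y i - mean N y)) <= C * AA N adj y y.
Proof.
  intros HN Hc. destruct (unif_bound N adj Hc) as [C [HC K]].
  assert (HNr : 0 < INR N) by (apply lt_0_INR; lia).
  exists (INR N * C / 2 + 1). split.
  { assert (0 <= INR N * C) by (apply Rmult_le_pos; lra). lra. }
  intros y. assert (HA := AA_nonneg N adj y).
  assert (Hs : rsum N (fun i => rsum N (fun j => (y i - y j) * (y i - y j))) <= INR N * (INR N * (C * AA N adj y y))).
  { rewrite <- !rsum_const. apply rsum_le; intros i Hi. apply rsum_le; intros j Hj. apply K; auto. }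
  rewrite var_identity in Hs by auto.
  set (V := rsum N (fun i => (y i - mean N y) * (y i - mean N y))) in *.
  assert (H2 : V <= INR N * C / 2 * AA N adj y y).
  { apply Rmult_le_reg_l with (2 * INR N); [lra|].
    replace (2 * INR N * (INR N * C / 2 * AA N adj y y)) with (INR N * (INR N * (C * AA N adj y y))) by field.
    exact Hs. }
  nra.
Qed.

Lemma dpl_expa a x : derivable_pt_lim (fun s => exp (a * s)) x (exp (a * x) * a).
Proof.
  apply derivable_pt_lim_ext with (comp exp (fun s => a * s)); [intros; reflexivity|].
  apply derivable_pt_lim_comp; [| apply derivable_pt_lim_exp].
  apply dpl_eq with (a * 1); [apply dpl_scal; apply derivable_pt_lim_id| ring].
Qed.

Lemma gronwall (h h' : R -> R) t0 a B : 0 < a ->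
  (forall t, t0 <= t -> derivable_pt_lim h t (h' t)) ->
  (forall t, t0 <= t -> h' t <= - a * h t + B) ->
  forall t, t0 <= t -> h t <= B / a + Rabs (h t0 - B / a) * exp (- a * (t - t0)).
Proof.
  intros Ha Hd Hi t Ht.
  destruct (Req_dec t t0) as [->|Hne].
  { replace (-a * (t0 - t0)) with 0 by ring. rewrite exp_0. pose proof (Rle_abs (h t0 - B/a)). lra. }
  assert (Hlt : t0 < t) by lra.
  set (W := fun s => (h s - B / a) * exp (a * s)).
  destruct (MVT_cor2 W (fun s => (h' s - 0) * exp (a * s) + (h s - B / a) * (exp (a * s) * a)) t0 t Hlt)
    as [c [Hc Hcr]].
  { intros c Hc. unfold W. apply (dpl_mult (fun s => h s - B / a) (fun s => exp (a * s))); [apply (dpl_minus h (fun _ => B / a)); [apply Hd; lra| apply dpl_const]| apply dpl_expa]. }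
  assert (Hneg : (h' c - 0) * exp (a * c) + (h c - B / a) * (exp (a * c) * a) <= 0).
  { assert (E : (h' c - 0) * exp (a * c) + (h c - B / a) * (exp (a * c) * a) = (h' c + a * h c - B) * exp (a * c)) by (field; lra).
    rewrite E. assert (0 < exp (a*c)) by apply exp_pos. specialize (Hi c ltac:(lra)).
    assert (h' c + a * h c - B <= 0) by lra. nra. }
  assert (HW : W t <= W t0) by nra.
  unfold W in HW.
  assert (He : exp (a * t) = exp (a * t0) * exp (a * (t - t0))) by (rewrite <- exp_plus; f_equal; ring).
  assert (He2 : exp (- a * (t - t0)) * exp (a * (t - t0)) = 1) by (rewrite <- exp_plus; replace (-a * (t - t0) + a * (t - t0)) with 0 by ring; apply exp_0).
  assert (P1 : 0 < exp (a * t0)) by apply exp_pos.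
  assert (P2 : 0 < exp (a * (t - t0))) by apply exp_pos.
  assert (P3 : 0 < exp (- a * (t - t0))) by apply exp_pos.
  rewrite He in HW.
  assert (HW2 : (h t - B / a) * exp (a * (t - t0)) <= h t0 - B / a).
  { apply Rmult_le_reg_l with (exp (a * t0)); [lra|]. nra. }
  assert (HW3 : h t - B / a <= (h t0 - B / a) * exp (- a * (t - t0))).
  { replace (h t - B / a) with ((h t - B / a) * exp (a * (t - t0)) * exp (- a * (t - t0))) by (rewrite Rmult_assoc, (Rmult_comm (exp (a * (t - t0)))), He2; ring).
    apply Rmult_le_compat_r; lra. }
  pose proof (Rle_abs (h t0 - B / a)). nra.
Qed.

Lemma decay K a eps : 0 <= K -> 0 < a -> 0 < eps ->
  exists s0, 0 < s0 /\ forall s, s0 <= s -> K * exp (- a * s) < eps.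
Proof.
  intros HK Ha He. exists (K / (a * eps) + 1). split.
  { assert (0 <= K / (a * eps)) by (apply Rmult_le_pos; [lra| left; apply Rinv_0_lt_compat; nra]). lra. }
  intros s Hs.
  assert (Hs0 : 0 < a * s).
  { assert (0 <= K / (a * eps)) by (apply Rmult_le_pos; [lra| left; apply Rinv_0_lt_compat; nra]). nra. }
  assert (H1 : 1 + a * s < exp (a * s)) by (apply exp_ineq1; lra).
  assert (He2 : exp (- a * s) * exp (a * s) = 1) by (rewrite <- exp_plus; replace (-a * s + a * s) with 0 by ring; apply exp_0).
  assert (P3 : 0 < exp (- a * s)) by apply exp_pos.
  assert (HK2 : K < eps * (1 + a * s)).
  { assert (K / (a * eps) * (a * eps) = K) by (field; lra).
    assert (K / (a*eps) + 1 <= s) by lra.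
    assert (0 <= (s - (K / (a*eps) + 1)) * (a * eps)) by (apply Rmult_le_pos; nra). nra. }
  nra.
Qed.

Lemma exp_le1 x : x <= 0 -> exp x <= 1.
Proof.
  intros H. destruct (Req_dec x 0) as [->|Hn]; [rewrite exp_0; lra|].
  rewrite <- exp_0. left. apply exp_increasing. lra.
Qed.

Lemma sq_abs_lt x e : 0 < e -> x * x < e * e -> Rabs x < e.
Proof.
  intros He H. destruct (Rcase_abs x) as [Hx|Hx]; [rewrite Rabs_left by lra | rewrite Rabs_right by lra]; nra.
Qed.

Section Core.
Variables (N : nat) (adj : nat -> nat -> bool) (k : R) (lam : R -> nat -> R)
  (g : nat -> R -> R) (c u Lam : nat -> R).
Hypotheses (HN : (0 < N)%nat) (Hsym : forall i j, adj i j = adj j i)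
  (Hconn : connected_graph N adj) (Hk : 0 < k)
  (Hg : forall i x, (i < N)%nat -> c i <= g i x <= u i)
  (HgL : forall i x, (i < N)%nat -> Lam i <= x -> g i x = c i)
  (Hsol : forall i t, (i < N)%nat -> 0 < t ->
     derivable_pt_lim (fun s => lam s i) t (g i (lam t i) + k * cp N adj (lam t) i))
  (Hpos : 0 < rsum N c).

Let lp t i := g i (lam t i) + k * cp N adj (lam t) i.
Let mp t := / INR N * rsum N (lp t).
Let D0 := / INR N * rsum N c.

Lemma HNr : 0 < INR N.
Proof. apply lt_0_INR; lia. Qed.

Lemma D0pos : 0 < D0.
Proof. unfold D0. assert (H := HNr). assert (0 < / INR N) by (apply Rinv_0_lt_compat; lra). nra. Qed.

Lemma mean_deriv t : 0 < t -> derivable_pt_lim (fun s => mean N (lam s)) t (mp t).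
Proof.
  intros Ht. unfold mean, mp. apply dpl_scal. apply rsum_deriv. intros i Hi. apply Hsol; auto.
Qed.

Lemma mp_ge t : D0 <= mp t.
Proof.
  unfold mp, D0, lp. rewrite rsum_plus, rsum_scal.
  assert (E : rsum N (fun i => cp N adj (lam t) i) = 0) by (apply cp_sum0; auto).
  try rewrite E; rewrite ?(cp_sum0 N adj (lam t) Hsym). assert (rsum N c <= rsum N (fun i => g i (lam t i))) by (apply rsum_le; intros; apply Hg; auto).
  assert (HH := HNr). assert (0 < / INR N) by (apply Rinv_0_lt_compat; lra). nra.
Qed.

Definition Vf t := rsum N (fun i => (lam t i - mean N (lam t)) * (lam t i - mean N (lam t))).

Let Vd t := rsum N (fun i => (lp t i - mp t) * (lam t i - mean N (lam t)) + (lam t i - mean N (lam t)) * (lp t i - mp t)).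

Lemma V_deriv t : 0 < t -> derivable_pt_lim Vf t (Vd t).
Proof.
  intros Ht. unfold Vf, Vd.
  apply (rsum_deriv N (fun s i => (lam s i - mean N (lam s)) * (lam s i - mean N (lam s)))).
  intros i Hi.
  apply (dpl_mult (fun s => lam s i - mean N (lam s)) (fun s => lam s i - mean N (lam s)));
  apply (dpl_minus (fun s => lam s i) (fun s => mean N (lam s))); [apply Hsol; auto| apply mean_deriv; auto|apply Hsol; auto| apply mean_deriv; auto].
Qed.

Lemma Vd_eq t : Vd t = 2 * rsum N (fun i => (lam t i - mean N (lam t)) * g i (lam t i)) - k * AA N adj (lam t) (lam t).
Proof.
  set (e := fun i => lam t i - mean N (lam t)).
  assert (Hse : rsum N e = 0).
  { unfold e. rewrite rsum_minus, rsum_const. unfold mean. assert (HH := HNr). field. lra. }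
  assert (Hcp : rsum N (fun i => e i * cp N adj (lam t) i) = - / 2 * AA N adj (lam t) (lam t)).
  { rewrite sym_id by auto. f_equal. unfold AA. apply rsum_ext; intros i _. apply rsum_ext; intros j _.
    unfold e. destruct (adj j i); ring. }
  unfold Vd. transitivity (rsum N (fun i => (2 * (e i * g i (lam t i)) + (2 * k) * (e i * cp N adj (lam t) i)) - (2 * mp t) * e i)).
  { apply rsum_ext; intros i _. unfold lp, e. ring. }
  rewrite rsum_minus, rsum_plus, !rsum_scal, Hse, Hcp. unfold e. set (QQ := rsum N _). set (AQ := AA N adj _ _). field.
Qed.

Lemma V_ineq : exists a B, 0 < a /\ forall t, 0 < t -> Vd t <= - a * Vf t + B.
Proof.
  destruct (poincare N adj HN Hconn) as [C [HC KC]].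
  set (ep := k / (2 * C)).
  assert (Hep : 0 < ep) by (unfold ep; apply Rdiv_lt_0_compat; lra).
  set (Bs := rsum N (fun i => c i * c i + u i * u i)).
  exists ep, (Bs / ep). split; auto. intros t Ht.
  rewrite Vd_eq.
  set (e := fun i => lam t i - mean N (lam t)).
  assert (H1 : 2 * rsum N (fun i => e i * g i (lam t i)) <= ep * Vf t + Bs / ep).
  { unfold Vf, Bs. fold e. rewrite <- rsum_scal. unfold Rdiv. rewrite (Rmult_comm _ (/ ep)), <- !rsum_scal, <- rsum_plus.
    apply rsum_le; intros i Hi. specialize (Hg i (lam t i) Hi).
    assert (Hgg : g i (lam t i) * g i (lam t i) <= c i * c i + u i * u i).
    { assert (0 <= c i * c i) by apply Rle_0_sqr. assert (0 <= u i * u i) by apply Rle_0_sqr.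
      destruct (Rle_dec 0 (g i (lam t i))).
      - assert (0 <= (u i - g i (lam t i)) * (u i + g i (lam t i))) by (apply Rmult_le_pos; lra). nra.
      - assert (0 <= (g i (lam t i) - c i) * (- (c i + g i (lam t i)))) by (apply Rmult_le_pos; lra). nra. }
    assert (Hq : 0 <= (ep * e i - g i (lam t i)) * (ep * e i - g i (lam t i))) by apply Rle_0_sqr.
    assert (Hiep : / ep * ep = 1) by (field; lra).
    assert (0 < / ep) by (apply Rinv_0_lt_compat; lra).
    apply Rmult_le_reg_l with ep; [lra|].
    replace (ep * (2 * (e i * g i (lam t i)))) with (2 * (ep * e i) * g i (lam t i)) by ring.
    unfold e in *.
    replace (ep * (ep * ((lam t i - mean N (lam t)) * (lam t i - mean N (lam t))) + / ep * (c i * c i + u i * u i))) with ((ep * (lam t i - mean N (lam t))) * (ep * (lam t i - mean N (lam t))) + (c i * c i + u i * u i)) by (field; lra).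
    nra. }
  assert (H2 : Vf t <= C * AA N adj (lam t) (lam t)) by apply KC.
  assert (H3 : k * AA N adj (lam t) (lam t) >= k / C * Vf t).
  { unfold Rdiv. apply Rle_ge. replace (k * / C * Vf t) with (k * (Vf t / C)) by (field; lra).
    apply Rmult_le_compat_l; [lra|]. apply Rmult_le_reg_l with C; [lra|]. replace (C * (Vf t / C)) with (Vf t) by (field; lra). lra. }
  assert (H4 : k / C = 2 * ep) by (unfold ep; field; lra).
  rewrite H4 in H3. unfold e in H1. lra.
Qed.


Lemma mean_lower t : 1 <= t -> mean N (lam 1) + D0 * (t - 1) <= mean N (lam t).
Proof.
  intros Ht. destruct (Req_dec t 1) as [->|Hne]; [lra|].
  destruct (MVT_cor2 (fun s => mean N (lam s)) mp 1 t ltac:(lra)) as [x [Hx Hxr]].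
  { intros x Hx. apply mean_deriv. lra. }
  assert (H := mp_ge x). nra.
Qed.

Lemma lam_lower : exists K0 m1, forall t i, 1 <= t -> (i < N)%nat -> m1 + D0 * (t - 1) - K0 <= lam t i.
Proof.
  destruct V_ineq as [a [B [Ha HV]]].
  set (K := B / a + Rabs (Vf 1 - B / a)).
  exists (Rabs K + 1), (mean N (lam 1)). intros t i Ht Hi.
  assert (HVt : Vf t <= K).
  { assert (G := gronwall Vf Vd 1 a B Ha (fun t Ht => V_deriv t ltac:(lra)) (fun t Ht => HV t ltac:(lra)) t Ht).
    assert (exp (- a * (t - 1)) <= 1) by (apply exp_le1; nra).
    assert (0 <= Rabs (Vf 1 - B / a)) by apply Rabs_pos.
    unfold K. nra. }
  assert (Hterm : (lam t i - mean N (lam t)) * (lam t i - mean N (lam t)) <= Vf t).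
  { unfold Vf. apply (rsum_term_le N (fun i => (lam t i - mean N (lam t)) * (lam t i - mean N (lam t))) i); auto.
    intros; apply Rle_0_sqr. }
  assert (Hm := mean_lower t Ht).
  assert (HK : K <= Rabs K) by apply Rle_abs.
  assert (HK0 : 0 <= Rabs K) by apply Rabs_pos.
  destruct (Rle_dec (mean N (lam t) - (Rabs K + 1)) (lam t i)) as [Hl|Hl]; [lra|].
  apply Rnot_le_lt in Hl. exfalso. set (x := lam t i - mean N (lam t)) in *.
  assert (x < - (Rabs K + 1)) by (unfold x; lra).
  assert ((Rabs K + 1) * (Rabs K + 1) < x * x) by nra. nra.
Qed.


Lemma eventually_large M : exists T, 1 <= T /\ forall t i, T <= t -> (i < N)%nat -> M <= lam t i.
Proof.
  destruct lam_lower as [K0 [m1 H]]. assert (HD := D0pos).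
  exists (1 + Rabs (M + K0 - m1) / D0). assert (0 <= Rabs (M + K0 - m1) / D0).
  { apply Rmult_le_pos; [apply Rabs_pos| left; apply Rinv_0_lt_compat; lra]. }
  split; [lra|]. intros t i Ht Hi. specialize (H t i ltac:(lra) Hi).
  assert (D0 * (t - 1) >= Rabs (M + K0 - m1)).
  { replace (Rabs (M + K0 - m1)) with (D0 * (Rabs (M + K0 - m1) / D0)) by (field; lra).
    apply Rle_ge, Rmult_le_compat_l; lra. }
  pose proof (Rle_abs (M + K0 - m1)). lra.
Qed.

Let w t i := c i + k * cp N adj (lam t) i.

Lemma w_deriv t i : 0 < t -> (i < N)%nat -> (forall j, (j < N)%nat -> lp t j = w t j) ->
  derivable_pt_lim (fun s => w s i) t (k * cp N adj (w t) i).
Proof.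
  intros Ht Hi Hlp. unfold w at 1.
  apply dpl_eq with (0 + k * rsum N (fun j => if adj j i then lp t j - lp t i else 0)).
  - apply (dpl_plus (fun _ => c i) (fun s => k * cp N adj (lam s) i)); [apply dpl_const|].
    apply dpl_scal. unfold cp.
    apply (rsum_deriv N (fun s j => if adj j i then lam s j - lam s i else 0)).
    intros j Hj. destruct (adj j i).
    + apply (dpl_minus (fun s => lam s j) (fun s => lam s i)); apply Hsol; auto.
    + apply dpl_const.
  - rewrite Rplus_0_l. unfold cp. f_equal. apply rsum_ext; intros j Hj.
    rewrite !Hlp; auto.
Qed.

Lemma mean_w t : mean N (w t) = D0.
Proof.
  unfold mean, w, D0. rewrite rsum_plus, rsum_scal.
  rewrite ?(cp_sum0 N adj (lam t) Hsym). ring.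
Qed.

Lemma final_deriv : forall eps, 0 < eps -> exists T, forall t l i, T <= t -> (i < N)%nat ->
  derivable_pt_lim (fun s => lam s i) t l -> Rabs (l - D0) < eps.
Proof.
  intros eps Heps.
  set (L := rsum N (fun i => Rabs (Lam i))).
  destruct (eventually_large L) as [T0 [HT0 HL]].
  assert (Hlp : forall t j, T0 <= t -> (j < N)%nat -> lp t j = w t j).
  { intros t j Ht Hj. unfold lp, w. rewrite HgL; auto.
    apply Rle_trans with L; [|apply HL; auto].
    apply Rle_trans with (Rabs (Lam j)); [apply Rle_abs|].
    apply (rsum_term_le N (fun i => Rabs (Lam i)) j); auto. intros; apply Rabs_pos. }
  destruct (poincare N adj HN Hconn) as [C [HC KC]].
  set (V2 := fun t => rsum N (fun i => (w t i - D0) * (w t i - D0))).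
  set (V2d := fun t => rsum N (fun i => k * cp N adj (w t) i * (w t i - D0) + (w t i - D0) * (k * cp N adj (w t) i))).
  assert (HV2d : forall t, T0 <= t -> derivable_pt_lim V2 t (V2d t)).
  { intros t Ht. unfold V2, V2d.
    apply (rsum_deriv N (fun s i => (w s i - D0) * (w s i - D0))). intros i Hi.
    apply (dpl_mult (fun s => w s i - D0) (fun s => w s i - D0));
    (apply dpl_eq with (k * cp N adj (w t) i - 0); [| ring]);
    apply (dpl_minus (fun s => w s i) (fun _ => D0)); try apply dpl_const;
    apply w_deriv; auto; try lra; intros; apply Hlp; auto. }
  assert (Hineq : forall t, T0 <= t -> V2d t <= - (k / C) * V2 t + 0).
  { intros t Ht.
    assert (E : V2d t = - k * AA N adj (w t) (w t)).
    { unfold V2d. transitivity (rsum N (fun i => (2 * k) * ((w t i - D0) * cp N adj (w t) i))).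
      { apply rsum_ext; intros; ring. }
      rewrite rsum_scal, (sym_id N adj (fun i => w t i - D0) (w t) Hsym).
      replace (AA N adj (fun i => w t i - D0) (w t)) with (AA N adj (w t) (w t)).
      - field.
      - unfold AA. apply rsum_ext; intros i _. apply rsum_ext; intros j _. destruct (adj j i); ring. }
    assert (HP := KC (w t)). rewrite mean_w in HP. fold (V2 t) in HP.
    rewrite E.
    assert (k / C * V2 t <= k * AA N adj (w t) (w t)).
    { unfold Rdiv. replace (k * / C * V2 t) with (k * (V2 t / C)) by (field; lra).
      apply Rmult_le_compat_l; [lra|]. apply Rmult_le_reg_l with C; [lra|].
      replace (C * (V2 t / C)) with (V2 t) by (field; lra). lra. }
    lra. }
  assert (Ha : 0 < k / C) by (apply Rdiv_lt_0_compat; lra).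
  set (K2 := Rabs (V2 T0 - 0 / (k / C))).
  destruct (decay K2 (k / C) (eps * eps) ltac:(apply Rabs_pos) Ha ltac:(nra)) as [s0 [Hs0 Hdec]].
  exists (T0 + s0). intros t l i Ht Hi Hl.
  assert (G := gronwall V2 V2d T0 (k / C) 0 Ha HV2d Hineq t ltac:(lra)).
  specialize (Hdec (t - T0) ltac:(lra)).
  assert (Z : 0 / (k / C) = 0) by (unfold Rdiv; ring).
  fold K2 in G. rewrite Z in G.
  assert (HV : V2 t < eps * eps) by lra.
  assert (Hterm : (w t i - D0) * (w t i - D0) <= V2 t).
  { unfold V2. apply (rsum_term_le N (fun i => (w t i - D0) * (w t i - D0)) i); auto. intros; apply Rle_0_sqr. }
  assert (El : l = w t i).
  { rewrite <- Hlp by (auto; lra). eapply uniqueness_limite; [exact Hl| apply Hsol; auto; lra]. }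
  rewrite El. apply sq_abs_lt; lra.
Qed.


Lemma core_thm : 0 < / INR N * rsum N c /\ forall i, (i < N)%nat ->
     (forall M, exists T, forall t, T <= t -> M <= lam t i) /\
     (forall eps, 0 < eps -> exists T, forall t l, T <= t ->
        derivable_pt_lim (fun s => lam s i) t l -> Rabs (l - / INR N * rsum N c) < eps).
Proof.
  split; [exact D0pos|]. intros i Hi. split.
  - intros M. destruct (eventually_large M) as [T [_ H]]. exists T. intros; apply H; auto.
  - intros eps He. destruct (final_deriv eps He) as [T H]. exists T. intros t l Ht Hl. eapply H; eauto.
Qed.

End Core.

Lemma xhat_range (v : R -> R) lo hi l : lo <= hi ->
  (forall x, lo <= x <= hi -> continuity_pt v x) -> lo <= xhat v lo hi l <= hi.
Proof.
  intros Hlh Hc. unfold xhat.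
  destruct (Rle_dec l (v lo)); [lra|].
  destruct (Rle_dec (v hi) l); [lra|].
  apply Rnot_le_lt in n. apply Rnot_le_lt in n0.
  unfold vinv.
  assert (Hex : exists x, lo < x < hi /\ v x = l).
  { destruct (Req_dec lo hi) as [E|E]; [subst; lra|].
    destruct (Ranalysis5.IVT_interv (fun x => v x - l) lo hi) as [z [Hz Hvz]].
    - intros a Ha. apply continuity_pt_minus; [apply Hc; auto| apply continuity_pt_const; intros ? ?; reflexivity].
    - lra.
    - lra.
    - lra.
    - exists z. assert (v z = l) by lra. split; auto.
      assert (z <> lo) by (intro; subst; lra). assert (z <> hi) by (intro; subst; lra). lra. }
  pose proof (epsilon_spec (inhabits lo) (fun x => lo < x < hi /\ v x = l) Hex) as [H _]. lra.
Qed.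

Lemma psi_mono (phi dphi : R -> R) lo hi :
  (forall x, derivable_pt_lim phi x (dphi x)) -> (forall x, lo <= x <= hi -> dphi x < 1) ->
  forall x y, lo <= x -> x <= y -> y <= hi -> x - phi x <= y - phi y.
Proof.
  intros Hd H1 x y Hx Hxy Hy. destruct (Req_dec x y) as [->|Hne]; [lra|].
  destruct (MVT_cor2 phi dphi x y ltac:(lra)) as [c [Hc Hcr]]; [intros; apply Hd|].
  specialize (H1 c ltac:(lra)). nra.
Qed.

Lemma vfun_cont (df dphi : R -> R) x : continuity df -> continuity dphi -> dphi x < 1 ->
  continuity_pt (vfun df dphi) x.
Proof.
  intros H1 H2 H3. unfold vfun.
  apply (continuity_pt_div df (fun x => 1 - dphi x)); [apply H1| |lra].
  apply (continuity_pt_minus (fun _ => 1) dphi); [apply continuity_pt_const; intros ? ?; reflexivity| apply H2].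
Qed.

Theorem theorem4
  (N : nat) (d lo hi : nat -> R) (f phi df dphi : nat -> R -> R)
  (adj : nat -> nat -> bool) (k : R) (lam : R -> nat -> R)
  (HN : (0 < N)%nat)
  (Hint : forall i, (i < N)%nat -> lo i <= hi i)
  (* Assumption 1 *)
  (Hdf : forall i x, (i < N)%nat -> derivable_pt_lim (f i) x (df i x))
  (Hdfc : forall i, (i < N)%nat -> continuity (df i))
  (Hdphi : forall i x, (i < N)%nat -> derivable_pt_lim (phi i) x (dphi i x))
  (Hdphic : forall i, (i < N)%nat -> continuity (dphi i))
  (Hfconv : forall i, (i < N)%nat -> strictly_convex_on (f i) (lo i) (hi i))
  (Hphiconv : forall i, (i < N)%nat -> convex_on (phi i) (lo i) (hi i))
  (Hdphi1 : forall i x, (i < N)%nat -> lo i <= x <= hi i -> dphi i x < 1)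
  (* Assumption 2 *)
  (Hdfpos : forall i x, (i < N)%nat -> lo i <= x <= hi i -> 0 < df i x)
  (* Assumption 3 *)
  (Hsym : forall i j, adj i j = adj j i)
  (Hconn : connected_graph N adj)
  (Hk : 0 < k)
  (* lam solves the dynamics for t > 0 (arbitrary initial condition) *)
  (Hsol : forall i t, (i < N)%nat -> 0 < t ->
     derivable_pt_lim (fun s => lam s i) t
       (rhs N adj k d lo hi phi df dphi (lam t) i)) :
  (0 < rsum N (fun i => d i - hi i + phi i (hi i)) ->
   let D0 := / INR N * rsum N (fun i => d i - hi i + phi i (hi i)) in
   0 < D0 /\
   forall i, (i < N)%nat ->
     (forall M, exists T, forall t, T <= t -> M <= lam t i) /\
     (forall eps, 0 < eps -> exists T, forall t l, T <= t ->
        derivable_pt_lim (fun s => lam s i) t l -> Rabs (l - D0) < eps))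
  /\
  (rsum N (fun i => d i - lo i + phi i (lo i)) < 0 ->
   let D1 := / INR N * rsum N (fun i => d i - lo i + phi i (lo i)) in
   D1 < 0 /\
   forall i, (i < N)%nat ->
     (forall M, exists T, forall t, T <= t -> lam t i <= M) /\
     (forall eps, 0 < eps -> exists T, forall t l, T <= t ->
        derivable_pt_lim (fun s => lam s i) t l -> Rabs (l - D1) < eps)).
Proof.
  set (v := fun i => vfun (df i) (dphi i)).
  set (xh := fun i x => xhat (v i) (lo i) (hi i) x).
  set (g := fun i x => d i - xh i x + phi i (xh i x)).
  set (ch := fun i => d i - hi i + phi i (hi i)).
  set (cl := fun i => d i - lo i + phi i (lo i)).
  assert (Hr : forall i x, (i < N)%nat -> lo i <= xh i x <= hi i).
  { intros i x Hi. apply xhat_range; auto. intros y Hy. apply vfun_cont; auto. }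
  assert (Hg : forall i x, (i < N)%nat -> ch i <= g i x <= cl i).
  { intros i x Hi. specialize (Hr i x Hi). assert (Hl := Hint i Hi).
    assert (P := psi_mono (phi i) (dphi i) (lo i) (hi i) (fun y => Hdphi i y Hi) (fun y Hy => Hdphi1 i y Hi Hy)).
    pose proof (P (xh i x) (hi i) ltac:(lra) ltac:(lra) ltac:(lra)).
    pose proof (P (lo i) (xh i x) ltac:(lra) ltac:(lra) ltac:(lra)).
    unfold g, ch, cl. lra. }
  assert (Hsol' : forall i t, (i < N)%nat -> 0 < t ->
     derivable_pt_lim (fun s => lam s i) t (g i (lam t i) + k * cp N adj (lam t) i)).
  { intros i t Hi Ht. exact (Hsol i t Hi Ht). }
  split.
  - intros Hp D0.
    apply (core_thm N adj k lam g ch cl (fun i => Rmax (v i (lo i)) (v i (hi i)) + 1)); auto.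
    intros i x Hi Hx. unfold g, ch, xh, xhat.
    assert (v i (lo i) <= Rmax (v i (lo i)) (v i (hi i))) by apply Rmax_l.
    assert (v i (hi i) <= Rmax (v i (lo i)) (v i (hi i))) by apply Rmax_r.
    destruct (Rle_dec x (v i (lo i))); [lra|].
    destruct (Rle_dec (v i (hi i)) x); [reflexivity| lra].
  - intros Hp D1.
    set (lam' := fun t i => - lam t i).
    set (g' := fun i x => - g i (- x)).
    assert (Hcp : forall t i, cp N adj (lam' t) i = - cp N adj (lam t) i).
    { intros t i. unfold cp, lam'. rewrite <- rsum_opp. apply rsum_ext; intros j _. destruct (adj j i); ring. }
    destruct (core_thm N adj k lam' g' (fun i => - cl i) (fun i => - ch i) (fun i => - v i (lo i))
                HN Hsym Hconn Hk) as [H0 H1].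
    + intros i x Hi. specialize (Hg i (- x) Hi). unfold g'. lra.
    + intros i x Hi Hx. unfold g', g, cl, xh, xhat.
      destruct (Rle_dec (- x) (v i (lo i))); [reflexivity| lra].
    + intros i t Hi Ht. rewrite Hcp. unfold g', lam'. rewrite Ropp_involutive.
      apply dpl_eq with (- (g i (lam t i) + k * cp N adj (lam t) i)); [| ring].
      apply (dpl_opp (fun s => lam s i)). apply Hsol'; auto.
    + rewrite rsum_opp. fold cl in Hp. lra.
    + rewrite rsum_opp in H0. assert (ED : D1 = / INR N * rsum N cl) by reflexivity.
      split; [rewrite ED; lra|].
      intros i Hi. destruct (H1 i Hi) as [HA HB]. split.
      * intros M. destruct (HA (- M)) as [T HT]. exists T. intros t Ht. specialize (HT t Ht). unfold lam' in HT. lra.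
      * intros eps He. destruct (HB eps He) as [T HT]. exists T. intros t l Ht Hl.
        assert (Hl' : derivable_pt_lim (fun s => lam' s i) t (- l)) by (apply (dpl_opp (fun s => lam s i)); auto).
        specialize (HT t (- l) Ht Hl'). rewrite rsum_opp in HT.
        replace (l - D1) with (- (- l - / INR N * - rsum N cl)) by (rewrite ED; ring).
        rewrite Rabs_Ropp. exact HT.
Qed.
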